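(* Let $A \subset \mathbb{Z}$ be a finite set with $\min A = 0$, $\max A = b$, and $\gcd A = 1$. Let $\mathcal{C}_A = \{\sum_{a \in A} n_a (a,1) : n_a \in \mathbb{N}\} \subset \mathbb{Z}^2$, $\Lambda = \{(bn, m+n) : m,n \in \mathbb{Z}\}$, and $\Lambda^+ = \{(bn, m+n) : m,n \in \mathbb{N}\}$. For $a \in \{0,\ldots,b-1\}$ let $\mathcal{S}_a$ be the set of points of $\mathcal{C}_A$ congruent to $(a,1)$ modulo $\Lambda$, and let $(g_a,h_a) \in \mathbb{N}^2$ be the unique point such that $\mathcal{S}_a \subseteq (g_a,h_a) + \Lambda^+$ and $((g_a,h_a) + \Lambda^+) \setminus \mathcal{S}_a$ is finite. Let $T_0(A) = \bigcup_{h \geq 0} hA$. Then \[ T_0(A) = \bigcup_{a=0}^{b-1} \big( g_a + b\cdot\mathbb{N} \big), \] where $b\cdot\mathbb{N} = \{0, b, 2b, \ldots\}$.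
   Context: $\mathbb{N} = \{0,1,2,\ldots\}$; $hA = \{a_1 + \cdots + a_h : a_i \in A\}$ with $0A = \{0\}$. The existence and uniqueness of $(g_a,h_a)$ as described is part of the setting (it is proved in the paper). *)

(* Defs.v *)
From mathcomp Require Import all_boot all_order all_algebra.
Set Implicit Arguments. Unset Strict Implicit. Unset Printing Implicit Defensive.
Import Order.TTheory GRing.Theory Num.Theory.
Local Open Scope ring_scope.

(* A finite set A of integers is represented by a sequence (duplicates are
   irrelevant: membership is what matters; sums over A use [undup A]). *)

Definition in_hA (A : seq int) (h : nat) (x : int) : Prop :=
  exists s : seq int, size s = h /\ all (fun a => a \in A) s /\
                      x = \sum_(a <- s) a.

Definition inT0 (A : seq int) (x : int) : Prop := exists h : nat, in_hA A h x.

Definition inCA (A : seq int) (p : int * int) : Prop :=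
  exists n : int -> nat,
    p = (\sum_(a <- undup A) (n a)%:Z * a, \sum_(a <- undup A) (n a)%:Z).

Definition inLam (b : int) (p : int * int) : Prop :=
  exists m n : int, p = (b * n, m + n).

Definition inLamPlus (b : int) (p : int * int) : Prop :=
  exists m n : nat, p = (b * n%:Z, m%:Z + n%:Z).

Definition inS (A : seq int) (b a : int) (p : int * int) : Prop :=
  inCA A p /\ inLam b (p.1 - a, p.2 - 1).

Definition is_gh (A : seq int) (b a : int) (g h : nat) : Prop :=
  (forall p, inS A b a p -> inLamPlus b (p.1 - g%:Z, p.2 - h%:Z)) /\
  (exists F : seq (int * int), forall p,
      inLamPlus b (p.1 - g%:Z, p.2 - h%:Z) -> ~ inS A b a p -> p \in F).

(* Main.v *)
Require Import Defs.
From mathcomp Require Import all_boot all_order all_algebra.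
From Stdlib Require Classical_Prop.
From mathcomp Require Import zify.
Import Order.TTheory GRing.Theory Num.Theory.
Local Open Scope ring_scope.

Lemma T0_0 A : inT0 A 0.
Proof. by exists 0%N, [::]; rewrite big_nil. Qed.

Lemma T0_add A x y : inT0 A x -> inT0 A y -> inT0 A (x + y).
Proof.
move=> [h1 [s1 [_ [a1 ->]]]] [h2 [s2 [_ [a2 ->]]]].
exists (size (s1 ++ s2)), (s1 ++ s2); split=> //; split; first by rewrite all_cat a1.
by rewrite big_cat.
Qed.

Lemma T0_1 A a : a \in A -> inT0 A a.
Proof. by move=> aA; exists 1%N, [:: a]; rewrite /= aA big_seq1. Qed.

Lemma T0_mul A a (k : nat) : a \in A -> inT0 A (k%:Z * a).
Proof.
move=> aA; elim: k => [|k IH]; first by rewrite mul0r; apply: T0_0.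
by rewrite -addn1 PoszD mulrDl mul1r addrC; apply: T0_add => //; apply: T0_1.
Qed.

Lemma CA_T0 A x y : inCA A (x, y) -> inT0 A x.
Proof.
move=> [n [-> _]].
have : all (fun a => a \in A) (undup A) by apply/allP=> a; rewrite mem_undup.
elim: (undup A) => [|c L IH]; first by rewrite big_nil => _; apply: T0_0.
move=> /= /andP [cA aL]; rewrite big_cons; apply: T0_add; first exact: T0_mul.
exact: IH.
Qed.

Lemma count_sum A (s : seq int) (F : int -> int) :
  all (fun a => a \in A) s ->
  \sum_(a <- undup A) (count_mem a s)%:Z * F a = \sum_(a <- s) F a.
Proof.
elim: s => [|y s IH]; first by rewrite big_nil big1 // => a _; rewrite mul0r.
move=> /= /andP [yA sA]; rewrite big_cons -(IH sA) -[RHS]addrC.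
rewrite [RHS]addrC.
have -> : \sum_(a <- undup A) ((y == a) + count_mem a s)%:Z * F a =
   \sum_(a <- undup A) ((y == a)%:Z * F a) + \sum_(a <- undup A) (count_mem a s)%:Z * F a.
  by rewrite -big_split /=; apply: eq_bigr => a _; rewrite PoszD mulrDl.
congr (_ + _).
rewrite (bigD1_seq y) ?mem_undup ?undup_uniq //= eqxx mul1r big1 ?addr0 //.
by move=> a /negbTE; rewrite eq_sym => ->; rewrite mul0r.
Qed.

Lemma hA_CA A h x : in_hA A h x -> inCA A (x, h%:Z).
Proof.
move=> [s [<- [sA ->]]]; exists (fun a => count_mem a s).
congr (_, _); first by rewrite (count_sum A s id sA).
have := count_sum A s (fun _ => 1) sA.
rewrite (eq_bigr (fun a => (count_mem a s)%:Z)); last by move=> a _; rewrite mulr1.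
move=> ->; rewrite -sum1_size.
elim: s {sA} => [|z s IH]; first by rewrite !big_nil.
by rewrite !big_cons -IH PoszD.
Qed.

Lemma fin_ex (F : seq (int * int)) (f : nat -> int * int) (P : nat -> Prop) :
  injective f -> (forall k, ~ P k -> f k \in F) -> exists k, P k.
Proof.
move=> finj HF; apply: Classical_Prop.NNPP => Hn.
have HnP : forall k, ~ P k by move=> k Pk; apply: Hn; exists k.
have : (size (map f (iota 0 (size F).+1)) <= size F)%N.
  apply: uniq_leq_size; first by rewrite map_inj_uniq ?iota_uniq.
  by move=> p /mapP [k _ ->]; apply: HF.
by rewrite size_map size_iota ltnn.
Qed.

Theorem proposition5p4 (A : seq int) (b : nat)
  (g h : nat -> nat)
  (A0 : 0 \in A) (Ab : b%:Z \in A)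
  (Abnd : forall a, a \in A -> 0 <= a <= b%:Z)
  (Agcd : \big[gcdz/0]_(a <- A) a = 1)
  (Hgh : forall a : nat, (a < b)%N -> is_gh A b%:Z a%:Z (g a) (h a)) :
  forall x : int, inT0 A x <->
    exists a : nat, (a < b)%N /\ exists k : nat, x = (g a)%:Z + b%:Z * k%:Z.
Proof.
have bpos : (0 < b)%N.
  case: b Abnd Agcd {Ab Hgh} => // Abnd Agcd; exfalso.
  suff : \big[gcdz/0]_(a <- A) a = 0 by rewrite Agcd.
  elim: A Abnd {A0 Agcd} => [|c L IH] Hb; first by rewrite big_nil.
  rewrite big_cons IH; last by move=> a aL; apply: Hb; rewrite inE aL orbT.
  have /andP [c1 c2] := Hb c (mem_head _ _).
  have -> : c = 0 by apply/eqP; rewrite eq_le c1 c2.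
  by [].
move=> x; split.
- move=> [hh Hh].
  have xge0 : 0 <= x.
    case: Hh => s [_ [sA ->]].
    rewrite big_seq; apply: sumr_ge0 => a aS.
    by have /andP [] := Abnd a (allP sA a aS).
  pose xn := `|x|%N.
  have xE : x = xn%:Z by rewrite /xn gez0_abs.
  pose a := (xn %% b)%N.
  have ab : (a < b)%N by rewrite ltn_pmod.
  have S : inS A b a (x, hh%:Z).
    split; first exact: hA_CA.
    exists (hh%:Z - 1 - (xn %/ b)%N%:Z), (xn %/ b)%N%:Z.
    have := divn_eq xn b; rewrite /a /= xE => E.
    congr (_, _); last by lia.
    rewrite {1}E PoszD PoszM; lia.
  have [H1 _] := Hgh a ab.
  have [m [n E]] := H1 _ S.
  case: E => E1 _.
  exists a; split=> //; exists n; lia.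
- move=> [a [ab [k ->]]].
  apply: T0_add; last by rewrite mulrC; apply: T0_mul.
  have [_ [F HF]] := Hgh a ab.
  have [k' [C _]] : exists k, inS A b a ((g a)%:Z, (h a)%:Z + k%:Z).
    apply: (@fin_ex F (fun k : nat => ((g a)%:Z, (h a)%:Z + k%:Z))).
      by move=> k1 k2 [] E; lia.
    move=> k0 nS; apply: HF => //.
    exists k0, 0%N => /=; congr (_, _); lia.
  exact: CA_T0 C.
Qed.
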